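(* Let $(G,u,v,\alpha,\beta)$ be a Guvab with $\lim_{k\to\infty}W_k=\frac12$ and $\beta<1$. Then there exists $N$ such that for all $k\ge N$, $$W_k=\frac12\sum_{w\in V(G)}|\xi_k(w)|,$$ where $\xi_k=\mu_k-\nu_k$.
   Context: A Guvab is a tuple $(G,u,v,\alpha,\beta)$ where $G$ is a finite, connected, simple graph, $u,v\in V(G)$, and $\alpha,\beta\in[0,1]$ with $\alpha\le\beta$. A random walk on $G$ with starting vertex $w$ and laziness $\gamma$ is the Markov chain $R_0=w$ and, for $i\ge1$, $R_i=R_{i-1}$ with probability $\gamma$ and $R_i=t$ with probability $\frac{1-\gamma}{\deg(R_{i-1})}$ for each neighbor $t$ of $R_{i-1}$. $\mu_k$ is the distribution after $k$ steps of the walk from $u$ with laziness $\alpha$, $\nu_k$ that of the walk from $v$ with laziness $\beta$, and $W_k=W(\mu_k,\nu_k)$ is the Wasserstein ($L^1$ optimal transport) distance with respect to the graph distance: the minimum over transportation plans (nonnegative $T$ on $V(G)\times V(G)$ with marginals $\mu_k,\nu_k$) of $\sum d(w_1,w_2)T(w_1,w_2)$. *)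

(* Defs.v *)
From HB Require Import structures.
From mathcomp Require Import all_boot all_order all_algebra.
From mathcomp Require Import all_classical all_reals all_analysis.
Set Implicit Arguments. Unset Strict Implicit. Unset Printing Implicit Defensive.
Import Order.TTheory GRing.Theory Num.Theory.
Local Open Scope ring_scope.
Local Open Scope classical_set_scope.

Definition simple_graph (T : finType) (e : rel T) : Prop :=
  symmetric e /\ irreflexive e.

Definition connected_graph (T : finType) (e : rel T) : Prop :=
  forall x y : T, connect e x y.

Fixpoint reach (T : finType) (e : rel T) (n : nat) (x : T) : {set T} :=
  match n with
  | 0 => [set x]
  | n'.+1 => reach e n' x :|: [set y | [exists z in reach e n' x, e z y]]
  end.

(* graph distance: least n with y within n steps of x (distances in a
   connected graph on #|T| vertices are < #|T|) *)
Definition gdist (T : finType) (e : rel T) (x y : T) : nat :=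
  find (fun n => y \in reach e n x) (iota 0 #|T|).

Definition deg (T : finType) (e : rel T) (x : T) : nat := #|[set y | e x y]|.

Definition trans (R : realType) (T : finType) (e : rel T) (g : R) (x y : T) : R :=
  if x == y then g else if e x y then (1 - g) / (deg e x)%:R else 0.

Definition step (R : realType) (T : finType) (e : rel T) (g : R) (m : T -> R) : T -> R :=
  fun y => \sum_(x : T) m x * trans e g x y.

Definition walk_dist (R : realType) (T : finType) (e : rel T) (w : T) (g : R)
  (k : nat) : T -> R :=
  iter k (step e g) (fun x => if x == w then 1 else 0).

Definition transport_plan (R : realType) (T : finType) (m n : T -> R)
  (P : T -> T -> R) : Prop :=
  (forall x y, 0 <= P x y) /\
  (forall x, \sum_(y : T) P x y = m x) /\
  (forall y, \sum_(x : T) P x y = n y).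

Definition wasserstein (R : realType) (T : finType) (e : rel T) (m n : T -> R) : R :=
  inf [set c : R | exists P, transport_plan m n P /\
         c = \sum_(x : T) \sum_(y : T) (gdist e x y)%:R * P x y].

Definition Wk (R : realType) (T : finType) (e : rel T) (u v : T) (a b : R)
  (k : nat) : R :=
  wasserstein e (walk_dist e u a k) (walk_dist e v b k).

(* Main.v *)
Require Import Defs.
From HB Require Import structures.
From mathcomp Require Import all_boot all_order all_algebra.
From mathcomp Require Import all_classical all_reals all_analysis.
From mathcomp Require Import lra ring.
Set Implicit Arguments. Unset Strict Implicit. Unset Printing Implicit Defensive.
Import Order.TTheory GRing.Theory Num.Theory.
Import numFieldNormedType.Exports.
Local Open Scope ring_scope.
Local Open Scope classical_set_scope.

Lemma near_oo_ex (P : nat -> Prop) : (\forall n \near \oo, P n) -> exists N, forall n, (N <= n)%N -> P n.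
Proof. case => N _ HN; exists N => n hn; exact: HN. Qed.

Lemma expr_small (R : realType) (z c eps : R) : 0 <= z < 1 -> 0 < eps -> exists M, forall m, (M <= m)%N -> z ^+ m * c < eps.
Proof.
move=> /andP[z0 z1] he.
have := @cvg_expr R z; rewrite ger0_norm // => /(_ z1) /cvgr_dist_lt /(_ (eps / (`|c| + 1))).
case. by apply: divr_gt0 => //; rewrite ltr_pwDr.
move=> N _ HN; exists N => m hm.
have := HN m hm; rewrite /= sub0r normrN ger0_norm ?exprn_ge0 // => h.
have hc : 0 < `|c| + 1 by rewrite ltr_pwDr.
move: h; rewrite ltr_pdivlMr // => h.
apply: le_lt_trans h. apply: ler_wpM2l; first exact: exprn_ge0.
have := ler_norm c. lra.
Qed.

Local Close Scope classical_set_scope.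

Section Kernel.
Variable R : realType.
Variable T : finType.
Implicit Types (K : T -> T -> R) (f g : T -> R).

Definition ap K f : T -> R := fun y => \sum_x f x * K x y.
Definition nrm f : R := \sum_x `|f x|.

Lemma apB K f g : ap K (fun x => f x - g x) = (fun y => ap K f y - ap K g y).
Proof. apply: funext => y; rewrite /ap -sumrB; apply: eq_bigr => x _; by rewrite mulrBl. Qed.

Lemma iterB K k f g : iter k (ap K) (fun x => f x - g x) =
  (fun y => iter k (ap K) f y - iter k (ap K) g y).
Proof. elim: k => [//|k IH]; by rewrite !iterS IH apB. Qed.

Lemma nrm_ge0 f : 0 <= nrm f.
Proof. by apply: sumr_ge0 => x _. Qed.

Section Stoch.
Variable K : T -> T -> R.
Hypothesis K0 : forall x y, 0 <= K x y.
Hypothesis K1 : forall x, \sum_y K x y = 1.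

Lemma sum_ap f : \sum_y ap K f y = \sum_x f x.
Proof.
rewrite /ap exchange_big /=; apply: eq_bigr => x _.
by rewrite -mulr_sumr K1 mulr1.
Qed.

Lemma ap_ge0 f : (forall x, 0 <= f x) -> forall y, 0 <= ap K f y.
Proof. by move=> hf y; apply: sumr_ge0 => x _; apply: mulr_ge0. Qed.

Lemma nrm_ap f : nrm (ap K f) <= nrm f.
Proof.
rewrite /nrm /ap.
apply: (@le_trans _ _ (\sum_y \sum_x `|f x| * K x y)).
  apply: ler_sum => y _; apply: (le_trans (ler_norm_sum _ _ _)).
  by apply: ler_sum => x _; rewrite normrM (ger0_norm (K0 _ _)).
rewrite exchange_big /=; apply: ler_sum => x _.
by rewrite -mulr_sumr K1 mulr1.
Qed.

Lemma nrm_iter k f : nrm (iter k (ap K) f) <= nrm f.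
Proof. elim: k => [//|k IH]; rewrite iterS; exact: le_trans (nrm_ap _) IH. Qed.

Lemma sum_iter k f : \sum_y iter k (ap K) f y = \sum_x f x.
Proof. elim: k => [//|k IH]; by rewrite iterS sum_ap. Qed.

Lemma iter_ge0 k f : (forall x, 0 <= f x) -> forall y, 0 <= iter k (ap K) f y.
Proof. move=> hf; elim: k => [//|k IH]; rewrite iterS; exact: ap_ge0. Qed.

Lemma doeblin (S : {set T}) (d : R) f :
  0 <= d -> (forall x y, x \in S -> y \in S -> d <= K x y) ->
  (forall x, x \notin S -> f x = 0) -> \sum_x f x = 0 ->
  nrm (ap K f) <= (1 - d * #|S|%:R) * nrm f.
Proof.
move=> d0 hd fS f0.
pose c y := if y \in S then d else 0.
have ap_eq y : ap K f y = \sum_x f x * (K x y - c y).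
  rewrite /ap; under [RHS]eq_bigr do rewrite mulrBr.
  by rewrite sumrB -mulr_suml f0 mul0r subr0.
have pos x y : `|f x| * `|K x y - c y| = `|f x| * (K x y - c y).
  case: (boolP (x \in S)) => hx; last by rewrite fS // normr0 !mul0r.
  have hK : 0 <= K x y - c y.
    rewrite subr_ge0 /c; case: ifP => hy; first exact: hd.
    exact: K0.
  by rewrite (ger0_norm hK).
rewrite /nrm.
apply: (@le_trans _ _ (\sum_y \sum_x `|f x| * (K x y - c y))).
  apply: ler_sum => y _; rewrite ap_eq; apply: (le_trans (ler_norm_sum _ _ _)).
  by apply: ler_sum => x _; rewrite normrM pos.
rewrite exchange_big /= mulr_sumr; apply: ler_sum => x _.
rewrite -mulr_sumr sumrB K1 mulrC; apply: ler_wpM2r => //.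
have -> : \sum_y c y = d * #|S|%:R.
  rewrite /c -big_mkcond /= sumr_const mulr_natr //.
by [].
Qed.

End Stoch.

Fixpoint Kp K n : T -> T -> R :=
  match n with
  | 0 => fun x y => (x == y)%:R
  | n.+1 => fun x y => \sum_z Kp K n x z * K z y
  end.

Lemma ap_Kp K n f : ap (Kp K n) f = iter n (ap K) f.
Proof.
elim: n f => [|n IH] f /=.
  apply: funext => y; rewrite /ap (bigD1 y) //= eqxx mulr1 big1 ?addr0 //.
  by move=> x /negbTE hx; rewrite hx mulr0.
rewrite -IH; apply: funext => y; rewrite /ap.
under eq_bigr do rewrite mulr_sumr.
rewrite exchange_big /=; apply: eq_bigr => z _.
by rewrite mulr_suml; apply: eq_bigr => x _; rewrite mulrA.
Qed.

Lemma Kp_ge0 K n : (forall x y, 0 <= K x y) -> forall x y, 0 <= Kp K n x y.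
Proof.
move=> K0; elim: n => [|n IH] x y /=; first by rewrite ler0n.
by apply: sumr_ge0 => z _; apply: mulr_ge0.
Qed.

Lemma Kp_sum1 K n : (forall x, \sum_y K x y = 1) -> forall x, \sum_y Kp K n x y = 1.
Proof.
move=> K1; elim: n => [|n IH] x /=.
  by rewrite (bigD1 x) //= eqxx big1 ?addr0 // => y /negbTE; rewrite eq_sym => ->.
rewrite exchange_big /= -[RHS](IH x); apply: eq_bigr => z _.
by rewrite -mulr_sumr K1 mulr1.
Qed.

End Kernel.

Local Close Scope classical_set_scope.

Lemma reach_mono (T : finType) (r : rel T) n m x : (n <= m)%N -> reach r n x \subset reach r m x.
Proof.
move=> hnm; rewrite -(subnK hnm); move: (m - n)%N => k.
induction k as [|k ihk]; first by [].
rewrite addSn /=; apply/fintype.subsetP => y hy; by rewrite finset.in_setU (fintype.subsetP ihk _ hy).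
Qed.

Lemma reach_path (T : finType) (r : rel T) x p : path r x p -> last x p \in reach r (size p) x.
Proof.
elim/last_ind: p => [|p z IH]; first by rewrite /= finset.in_set1.
rewrite rcons_path last_rcons size_rcons => /andP[hp hz] /=.
rewrite finset.in_setU; apply/orP; right; rewrite finset.inE; apply/existsP; exists (last x p).
by rewrite IH.
Qed.

Lemma connect_reach (T : finType) (r : rel T) x y : connect r x y -> y \in reach r #|T| x.
Proof.
move=> /connectP[p hp ->].
case: (shortenP hp) => p' hp' hu _.
have hs : (size p' <= #|T|)%N.
  have := max_card (mem (x :: p')); rewrite (card_uniqP hu) /=.
  exact: leq_trans.
by apply: (fintype.subsetP (@reach_mono _ r _ _ x hs)); apply: reach_path.
Qed.

Lemma fin_min (R : realType) (U : finType) (P : pred U) (F : U -> R) :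
  (forall u, P u -> 0 < F u) -> exists2 d, 0 < d & forall u, P u -> d <= F u.
Proof.
move=> hF.
suff: forall s : seq U, exists2 d, 0 < d & forall u, u \in s -> P u -> d <= F u.
  case/(_ (enum U)) => d d0 hd; exists d => // u; apply: hd; by rewrite mem_enum.
elim => [|w s [d d0 hd]]; first by exists 1.
exists (if P w then Num.min d (F w) else d).
  by case: ifP => // hw; rewrite lt_min d0 hF.
move=> u; rewrite in_cons => /orP[/eqP -> hw|hu hP].
  by rewrite hw ge_min lexx orbT.
case: ifP => _; last exact: hd.
by rewrite ge_min hd.
Qed.

Section Conv.
Variable R : realType.
Variable T : finType.
Variable K : T -> T -> R.
Hypothesis K0 : forall x y, 0 <= K x y.
Hypothesis K1 : forall x, \sum_y K x y = 1.
Hypothesis Kd : forall z, 0 < K z z.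
Let r : rel T := fun a b => 0 < K a b.

Lemma Kp_ge_step n x z y : Kp K n x z * K z y <= Kp K n.+1 x y.
Proof.
rewrite /= (bigD1 z) //= lerDl; apply: sumr_ge0 => i _; apply: mulr_ge0 => //.
exact: Kp_ge0.
Qed.

Lemma Kp_pos n x y : y \in reach r n x -> 0 < Kp K n x y.
Proof.
elim: n y => [|n IH] y /=.
  by rewrite finset.in_set1 => /eqP ->; rewrite eqxx ltr01.
rewrite finset.in_setU => /orP[hy|].
  apply: lt_le_trans (Kp_ge_step n x y y); by apply: mulr_gt0; [apply: IH|apply: Kd].
rewrite finset.inE => /existsP[z /andP[hz hzy]].
apply: lt_le_trans (Kp_ge_step n x z y); by apply: mulr_gt0; [apply: IH|].
Qed.

Lemma iter_fix (p : T -> R) k : ap K p = p -> iter k (ap K) p = p.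
Proof. move=> hp; elim: k => [//|k IH]; by rewrite iterS IH hp. Qed.

Lemma conv (S : {set T}) (p mu : T -> R) x0 :
  (forall x y, x \in S -> y \notin S -> K x y = 0) ->
  (forall x y, x \in S -> y \in S -> connect r x y) ->
  x0 \in S ->
  ap K p = p -> (forall x, x \notin S -> p x = 0) -> (forall x, x \notin S -> mu x = 0) ->
  \sum_x p x = 1 -> \sum_x mu x = 1 ->
  forall eps, 0 < eps -> exists N, forall k, (N <= k)%N ->
    nrm (fun y => iter k (ap K) mu y - p y) < eps.
Proof.
move=> Kcl Sconn x0S hp pS muS p1 mu1 eps he.
pose h := fun x => mu x - p x.
have eqh k : (fun y => iter k (ap K) mu y - p y) = iter k (ap K) h.
  by rewrite /h iterB (iter_fix k hp).
have hS k x : x \notin S -> iter k (ap K) h x = 0.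
  elim: k x => [|k IH] x hx /=; first by rewrite /h muS // pS // subr0.
  rewrite /ap big1 // => z _.
  case: (boolP (z \in S)) => hz; first by rewrite Kcl // mulr0.
  by rewrite IH // mul0r.
have h0 k : \sum_x iter k (ap K) h x = 0.
  by rewrite sum_iter // /h sumrB p1 mu1 subrr.
pose N := #|T|.
have [d d0 hd] := @fin_min R (T * T)%type (fun q => (q.1 \in S) && (q.2 \in S))
   (fun q => Kp K N q.1 q.2) (fun q => fun hq => Kp_pos (connect_reach (Sconn _ _ (andP hq).1 (andP hq).2))).
have hd' x y : x \in S -> y \in S -> d <= Kp K N x y.
  by move=> hx hy; apply: (hd (x, y)); rewrite /= hx hy.
pose rho := 1 - d * #|S|%:R.
have rho0 : 0 <= rho.
  rewrite /rho subr_ge0.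
  apply: (@le_trans _ _ (\sum_(y in S) Kp K N x0 y)).
    by rewrite mulr_natr -sumr_const; apply: ler_sum => y hy; apply: hd'.
  rewrite -[X in _ <= X](Kp_sum1 N K1 x0).
  rewrite [X in _ <= X](bigID (fun y => y \in S)) /= lerDl.
  by apply: sumr_ge0 => y _; apply: Kp_ge0.
have rho1 : rho < 1.
  rewrite /rho ltrBlDr ltrDl; apply: mulr_gt0 => //.
  by rewrite ltr0n; apply/card_gt0P; exists x0.
have step m : nrm (iter (N + m) (ap K) h) <= rho * nrm (iter m (ap K) h).
  rewrite iterD -ap_Kp; apply: doeblin => //.
  - exact: Kp_ge0.
  - exact: Kp_sum1.
  - by apply: ltW.
  - exact: hS.
have bnd j m : nrm (iter (j * N + m) (ap K) h) <= rho ^+ j * nrm h.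
  elim: j => [|j IH]; first by rewrite mul0n add0n expr0 mul1r; apply: nrm_iter.
  rewrite mulSn -addnA exprS -mulrA; apply: le_trans (step _) _.
  by apply: ler_wpM2l.
have [M hM] := @expr_small R rho (nrm h) eps (introT andP (conj rho0 rho1)) he.
have N0 : (0 < N)%N by rewrite /N; apply/card_gt0P; exists x0.
exists (M * N)%N => k hk.
rewrite eqh (divn_eq k N).
apply: le_lt_trans (bnd _ _) _.
apply: hM; by rewrite leq_divRL.
Qed.

End Conv.

Local Close Scope classical_set_scope.


Section Graph.
Variable R : realType.
Variable T : finType.
Variable e : rel T.
Hypothesis esym : symmetric e.
Hypothesis eirr : irreflexive e.
Hypothesis deg0 : forall x, (0 < deg e x)%N.

Lemma degE x : (deg e x)%:R = \sum_y (if e x y then 1 else 0 : R).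
Proof.
rewrite /deg -sum1_card natr_sum big_mkcond /=; apply: eq_bigr => y _.
case: (boolP (e x y)) => h; first by rewrite mem_set.
by rewrite memNset //; move/negP: h.
Qed.

Lemma degE' y : (deg e y)%:R = \sum_x (if e x y then 1 else 0 : R).
Proof. by rewrite degE; apply: eq_bigr => x _; rewrite esym. Qed.

Lemma degR_gt0 x : 0 < (deg e x)%:R :> R.
Proof. by rewrite ltr0n. Qed.

Lemma degR_neq0 x : (deg e x)%:R != 0 :> R.
Proof. by rewrite gt_eqF // degR_gt0. Qed.

Lemma trans_split (g : R) x y : trans e g x y =
  (if x == y then g else 0) + (if e x y then (1 - g) / (deg e x)%:R else 0).
Proof.
rewrite /trans; case: eqVneq => [<-|_]; first by rewrite eirr addr0.
by rewrite add0r.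
Qed.

Lemma sum_if_eq (F : T -> R) x : \sum_y (if x == y then F y else 0) = F x.
Proof.
rewrite (bigD1 x) //= eqxx big1 ?addr0 // => y /negbTE.
by rewrite eq_sym => ->.
Qed.

Lemma sum_if_eq' (F : T -> R) y : \sum_x (if x == y then F x else 0) = F y.
Proof.
rewrite (bigD1 y) //= eqxx big1 ?addr0 // => x /negbTE -> //.
Qed.

Lemma trans_sum1 (g : R) x : \sum_y trans e g x y = 1.
Proof.
under eq_bigr do rewrite trans_split.
rewrite big_split /= (sum_if_eq (fun _ => g)).
have -> : \sum_y (if e x y then (1 - g) / (deg e x)%:R else 0) =
   (1 - g) / (deg e x)%:R * (deg e x)%:R.
  rewrite degE mulr_sumr; apply: eq_bigr => y _; by case: (e x y); rewrite ?mulr1 ?mulr0.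
rewrite divfK ?degR_neq0 //; by rewrite addrC subrK.
Qed.

Lemma trans_ge0 (g : R) x y : 0 <= g <= 1 -> 0 <= trans e g x y.
Proof.
move=> /andP[g0 g1]; rewrite /trans; case: ifP => // _; case: ifP => // _.
by apply: divr_ge0; [rewrite subr_ge0|apply: ltW; apply: degR_gt0].
Qed.

Lemma trans_edge_gt0 (g : R) x y : g < 1 -> e x y -> 0 < trans e g x y.
Proof.
move=> g1 hxy; rewrite /trans; case: eqVneq => [exy|_].
  by move: hxy; rewrite exy eirr.
by rewrite hxy; apply: divr_gt0; [rewrite subr_gt0|apply: degR_gt0].
Qed.

Lemma trans0_neq0 x y : trans e (0 : R) x y != 0 -> e x y.
Proof. by rewrite /trans; case: ifP => [_|_]; [rewrite eqxx|case: (e x y) => //; rewrite eqxx]. Qed.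

Definition Dsum : R := \sum_x (deg e x)%:R.
Definition pi x : R := (deg e x)%:R / Dsum.

Lemma Dsum_gt0 : T -> 0 < Dsum.
Proof.
move=> x0; rewrite /Dsum (bigD1 x0) //=; apply: lt_le_trans (degR_gt0 x0) _.
rewrite lerDl; by apply: sumr_ge0.
Qed.

Lemma pi_gt0 x : 0 < pi x.
Proof. by apply: divr_gt0; [apply: degR_gt0|apply: Dsum_gt0]. Qed.

Lemma pi_sum1 : T -> \sum_x pi x = 1.
Proof. move=> x0; by rewrite -mulr_suml divff // gt_eqF // Dsum_gt0. Qed.

Lemma pi_stat (g : R) : ap (trans e g) pi = pi.
Proof.
apply: funext => y; rewrite /ap.
under eq_bigr do rewrite trans_split mulrDr.
rewrite big_split /=.
have -> : \sum_x pi x * (if x == y then g else 0) = pi y * g.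
  rewrite -(sum_if_eq' (fun x => pi x * g) y); apply: eq_bigr => x _.
  by case: eqP; rewrite ?mulr0.
have -> : \sum_x pi x * (if e x y then (1 - g) / (deg e x)%:R else 0) =
    (1 - g) / Dsum * (deg e y)%:R.
  rewrite degE' mulr_sumr; apply: eq_bigr => x _; case: (e x y); rewrite ?mulr0 //.
  rewrite /pi mulr1 mulrC -!mulrA; congr (_ * _).
  rewrite mulrCA mulrA divff ?degR_neq0 // mul1r //.
have hD : Dsum != 0 by rewrite gt_eqF // Dsum_gt0.
rewrite /pi; by field.
Qed.

Definition dlt (w : T) : T -> R := fun x => if x == w then 1 else 0.

Lemma dlt_sum w : \sum_x dlt w x = 1.
Proof. rewrite /dlt (bigD1 w) //= eqxx big1 ?addr0 // => x /negbTE -> //. Qed.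

Lemma dlt_ge0 w x : 0 <= dlt w x.
Proof. rewrite /dlt; by case: ifP. Qed.

Lemma walkE w (g : R) k : walk_dist e w g k = iter k (ap (trans e g)) (dlt w).
Proof. by []. Qed.

Definition cv (f : nat -> T -> R) (p : T -> R) :=
  forall eps, 0 < eps -> exists N, forall k, (N <= k)%N -> nrm (fun y => f k y - p y) < eps.

Lemma nbr x : exists y, e x y.
Proof.
have := deg0 x; rewrite /deg => /card_gt0P [y hy]; exists y.
by have := set_mem hy.
Qed.

Lemma cv_lazy (g : R) w : 0 < g < 1 -> (forall x y, connect e x y) -> cv (walk_dist e w g) pi.
Proof.
move=> /andP[g0 g1] conn eps he.
have g01 : 0 <= g <= 1 by rewrite (ltW g0) (ltW g1).
have Kd : forall z, 0 < trans e g z z by move=> z; rewrite /trans eqxx.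
have Kcl : forall x y, x \in [set: T] -> y \notin [set: T] -> trans e g x y = 0.
  by move=> x y _; rewrite finset.in_setT.
have Sc : forall x y, x \in [set: T] -> y \in [set: T] -> connect (fun a b => 0 < trans e g a b) x y.
  move=> x y _ _; apply: (connect_sub _ (conn x y)) => a b hab.
  by apply: connect1; apply: trans_edge_gt0.
have pS : forall x, x \notin [set: T] -> pi x = 0 by move=> x; rewrite finset.in_setT.
have mS : forall x, x \notin [set: T] -> dlt w x = 0 by move=> x; rewrite finset.in_setT.
exact: (@conv R T (trans e g) (fun x y => trans_ge0 x y g01) (trans_sum1 g) Kd [set: T] pi (dlt w) w
  Kcl Sc (finset.in_setT w) (pi_stat g) pS mS (pi_sum1 w) (dlt_sum w) eps he).
Qed.

Definition K0 : T -> T -> R := trans e 0.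
Definition K2 : T -> T -> R := Kp K0 2.
Definition R2 : rel T := fun x y => [exists z, e x z && e z y].

Lemma K0_ge0 x y : 0 <= K0 x y.
Proof. apply: trans_ge0; by rewrite lexx ler01. Qed.

Lemma K2_ge0 x y : 0 <= K2 x y.
Proof. apply: Kp_ge0; exact: K0_ge0. Qed.

Lemma K2_sum1 x : \sum_y K2 x y = 1.
Proof. apply: Kp_sum1; exact: trans_sum1. Qed.

Lemma Kp1 (K : T -> T -> R) x y : Kp K 1 x y = K x y.
Proof. by rewrite /=; under eq_bigr do rewrite mulr_natl mulrb; rewrite (sum_if_eq (fun z => K z y)). Qed.

Lemma K2_ge x z y : K0 x z * K0 z y <= K2 x y.
Proof. by have := @Kp_ge_step R T K0 K0_ge0 1 x z y; rewrite Kp1. Qed.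

Lemma K2_pos x z y : e x z -> e z y -> 0 < K2 x y.
Proof.
move=> h1 h2; apply: lt_le_trans (K2_ge x z y).
by apply: mulr_gt0; apply: trans_edge_gt0; rewrite ?ltr01.
Qed.

Lemma K2_diag z : 0 < K2 z z.
Proof. have [w hw] := nbr z; apply: (K2_pos hw); by rewrite esym. Qed.

Lemma K2_R2 x y : K2 x y != 0 -> R2 x y.
Proof.
apply: contraR => /existsPn hn; rewrite /K2 (_ : Kp K0 2 x y = \sum_z Kp K0 1 x z * K0 z y) //.
rewrite big1 // => z _; rewrite Kp1.
have := hn z; rewrite negb_and => /orP[h|h].
  suff -> : K0 x z = 0 by rewrite mul0r.
  by apply/eqP; apply: contraR h => /trans0_neq0.
suff -> : K0 z y = 0 by rewrite mulr0.
by apply/eqP; apply: contraR h => /trans0_neq0.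
Qed.

Lemma ap_K2 f : ap K2 f = ap K0 (ap K0 f).
Proof. by rewrite /K2 ap_Kp. Qed.

Lemma iter_even j f : iter (j.*2) (ap K0) f = iter j (ap K2) f.
Proof.
elim: j => [//|j IH]; by rewrite doubleS !iterS IH ap_K2.
Qed.

Lemma iter_odd j f : iter (j.*2).+1 (ap K0) f = iter j (ap K2) (ap K0 f).
Proof. by rewrite iterSr iter_even. Qed.

Lemma R2_sym : symmetric R2.
Proof.
move=> x y; apply/existsP/existsP => [][z /andP[h1 h2]]; exists z;
  by rewrite esym h2 esym h1.
Qed.

Lemma conv2 (S : {set T}) (p mu : T -> R) x0 :
  (forall x y, x \in S -> y \notin S -> K2 x y = 0) ->
  (forall x y, x \in S -> y \in S -> connect R2 x y) ->
  x0 \in S ->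
  ap K2 p = p -> (forall x, x \notin S -> p x = 0) -> (forall x, x \notin S -> mu x = 0) ->
  \sum_x p x = 1 -> \sum_x mu x = 1 ->
  forall eps, 0 < eps -> exists N, forall k, (N <= k)%N ->
    nrm (fun y => iter k (ap K2) mu y - p y) < eps.
Proof.
move=> Kcl Sc x0S hp pS mS p1 m1.
apply: (conv K2_ge0 K2_sum1 K2_diag Kcl _ x0S hp pS mS p1 m1).
move=> x y hx hy; apply: (connect_sub _ (Sc x y hx hy)) => a b /existsP[z /andP[h1 h2]].
by apply: connect1; apply: K2_pos h1 h2.
Qed.

Lemma sum_apK0 f : \sum_y ap K0 f y = \sum_x f x.
Proof. apply: sum_ap; exact: trans_sum1. Qed.

Lemma cv_single w : (forall x y, connect R2 x y) -> cv (walk_dist e w 0) pi.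
Proof.
move=> hall eps he.
have Kcl : forall x y, x \in [set: T] -> y \notin [set: T] -> K2 x y = 0.
  by move=> x y _; rewrite finset.in_setT.
have Sc : forall x y, x \in [set: T] -> y \in [set: T] -> connect R2 x y by move=> *; apply: hall.
have pS : forall x, x \notin [set: T] -> pi x = 0 by move=> x; rewrite finset.in_setT.
have mS : forall (f : T -> R) x, x \notin [set: T] -> f x = 0 by move=> f x; rewrite finset.in_setT.
have hp : ap K2 pi = pi by rewrite ap_K2 !pi_stat.
have [N1 h1] := conv2 Kcl Sc (finset.in_setT w) hp pS (mS _) (pi_sum1 w) (dlt_sum w) he.
have [N2 h2] := conv2 Kcl Sc (finset.in_setT w) hp pS (mS (ap K0 (dlt w))) (pi_sum1 w)
   (etrans (sum_apK0 _) (dlt_sum w)) he.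
exists (maxn N1 N2).*2.+1 => k hk.
rewrite walkE -(odd_double_half k).
have hj : (maxn N1 N2 <= k./2)%N.
  have hk' := hk; rewrite -(odd_double_half k) in hk'.
  rewrite -leq_double -ltnS; apply: leq_trans hk' _.
  by case: (odd k).
case: (odd k).
  rewrite add1n iter_odd; apply: h2; apply: leq_trans hj; exact: leq_maxr.
rewrite add0n iter_even; apply: h1; apply: leq_trans hj; exact: leq_maxl.
Qed.

Definition piS (A : {set T}) x : R := if x \in A then pi x else 0.
Definition pA (A : {set T}) x : R := 2 * piS A x.
Definition bip (A : {set T}) := forall x y, e x y -> (x \in A) = (y \notin A).

Lemma bipC A : bip A -> bip (~: A).
Proof. by move=> h x y hxy; rewrite !finset.in_setC (h _ _ hxy). Qed.

Lemma ap0_supp A f : bip A -> (forall x, x \notin A -> f x = 0) -> forall y, y \in A -> ap K0 f y = 0.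
Proof.
move=> hb hf y hy; rewrite /ap big1 // => x _.
case: (boolP (x \in A)) => hx; last by rewrite hf // mul0r.
suff -> : K0 x y = 0 by rewrite mulr0.
apply: contraTeq hy => hK; have hxy := trans0_neq0 hK.
by rewrite -(hb _ _ hxy) hx.
Qed.

Lemma ap0_piS A : bip A -> ap K0 (piS A) = piS (~: A).
Proof.
move=> hb; apply: funext => y; rewrite {2}/piS finset.in_setC.
case: (boolP (y \in A)) => hy /=.
  by apply: (ap0_supp hb) => // x hx; rewrite /piS (negbTE hx).
have := congr1 (fun f => f y) (pi_stat (0:R)); rewrite /= => <-.
rewrite /ap; apply: eq_bigr => x _; rewrite /piS.
case: (boolP (x \in A)) => hx //.
suff -> : trans e (0:R) x y = 0 by rewrite mul0r mulr0.
apply: contraTeq hx => hK; have hxy := trans0_neq0 hK.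
by rewrite negbK (hb _ _ hxy).
Qed.

Lemma apZ (K : T -> T -> R) (c : R) f : ap K (fun x => c * f x) = (fun y => c * ap K f y).
Proof. apply: funext => y; rewrite /ap mulr_sumr; apply: eq_bigr => x _; by rewrite mulrA. Qed.

Lemma sum_piS A : T -> bip A -> \sum_x piS A x = 1 / 2.
Proof.
move=> x0 hb.
have h1 : \sum_x piS (~: A) x = \sum_x piS A x by rewrite -(ap0_piS hb) sum_apK0.
have h2 : \sum_x piS A x + \sum_x piS (~: A) x = 1.
  rewrite -big_split /= -(pi_sum1 x0); apply: eq_bigr => x _.
  by rewrite /piS finset.in_setC; case: (x \in A); rewrite /= ?addr0 ?add0r.
move: h2; rewrite h1 => h2; lra.
Qed.

Definition side (A : {set T}) (k : nat) : {set T} := if odd k then ~: A else A.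

Lemma bip_side A k : bip A -> bip (side A k).
Proof. rewrite /side; case: (odd k) => // h; exact: bipC. Qed.

Lemma walk0_supp A w k : bip A -> w \in A ->
  forall x, x \notin side A k -> walk_dist e w (0:R) k x = 0.
Proof.
move=> hb hw; elim: k => [|k IH] x hx.
  rewrite walkE /= /dlt; case: eqP => // exw; by move: hx; rewrite /side /= exw hw.
rewrite walkE iterS -walkE; apply: (ap0_supp (bip_side k hb)) => //.
by move: hx; rewrite /side /=; case: (odd k); rewrite /= ?finset.in_setC ?negbK.
Qed.

Lemma K2_cl A x y : bip A -> x \in A -> y \notin A -> K2 x y = 0.
Proof.
move=> hb hx hy; apply/eqP; apply: contraTT hy => /K2_R2 /existsP[z /andP[h1 h2]].
have hz : z \notin A by rewrite -(hb _ _ h1) hx.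
apply/negP => hy'; have h2' := hb _ _ h2; rewrite (negbTE hz) hy' in h2'; discriminate.
Qed.

Lemma K2_pA A : bip A -> ap K2 (pA A) = pA A.
Proof.
move=> hb; rewrite ap_K2 /pA !apZ ap0_piS // ap0_piS ?finset.setCK //; exact: bipC.
Qed.

Lemma sum_pA A : T -> bip A -> \sum_x pA A x = 1.
Proof. move=> x0 hb; rewrite /pA -mulr_sumr sum_piS //; lra. Qed.

Lemma pA_out (A : {set T}) x : x \notin A -> pA A x = 0.
Proof. by move=> hx; rewrite /pA /piS (negbTE hx) mulr0. Qed.

Lemma cv_bip_even A w : bip A -> (forall x y, x \in A -> y \in A -> connect R2 x y) -> w \in A ->
  forall eps, 0 < eps -> exists N, forall j, (N <= j)%N ->
    nrm (fun y => walk_dist e w (0:R) (j.*2) y - pA A y) < eps.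
Proof.
move=> hb hc hw eps he.
have mS : forall x, x \notin A -> dlt w x = 0.
  move=> x hx; rewrite /dlt; case: eqP => // exw; by move: hx; rewrite exw hw.
have [N hN] := conv2 (fun x y => @K2_cl A x y hb) hc hw (K2_pA hb) (@pA_out A) mS
  (sum_pA w hb) (dlt_sum w) he.
exists N => j hj; rewrite walkE iter_even; exact: hN.
Qed.

Lemma cv_bip_odd A w : bip A -> (forall x y, x \notin A -> y \notin A -> connect R2 x y) -> w \in A ->
  forall eps, 0 < eps -> exists N, forall j, (N <= j)%N ->
    nrm (fun y => walk_dist e w (0:R) (j.*2).+1 y - pA (~: A) y) < eps.
Proof.
move=> hb hc hw eps he.
have hbC := bipC hb.
have [y0 hy0] := nbr w.
have y0C : y0 \in ~: A by rewrite finset.in_setC -(hb _ _ hy0).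
have hc' : forall x y, x \in ~: A -> y \in ~: A -> connect R2 x y.
  by move=> x y; rewrite !finset.in_setC; apply: hc.
have mS : forall x, x \notin ~: A -> ap K0 (dlt w) x = 0.
  move=> x; rewrite finset.in_setC negbK; apply: (ap0_supp hb).
  move=> z hz; rewrite /dlt; case: eqP => // ezw; by move: hz; rewrite ezw hw.
have [N hN] := conv2 (fun x y => @K2_cl (~: A) x y hbC) hc' y0C (K2_pA hbC) (@pA_out (~: A)) mS
  (sum_pA w hbC) (etrans (sum_apK0 _) (dlt_sum w)) he.
exists N => j hj; rewrite walkE iter_odd; exact: hN.
Qed.

Lemma R2_refl x : R2 x x.
Proof. have [y hy] := nbr x; apply/existsP; exists y; by rewrite hy esym hy. Qed.

Lemma L1 x x' y y' : R2 x x' -> e x y -> e x' y' -> connect R2 y y'.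
Proof.
move=> /existsP[z /andP[h1 h2]] hy hy'.
apply: (@connect_trans _ _ z); apply: connect1; apply/existsP.
  by exists x; rewrite esym hy h1.
by exists x'; rewrite h2 hy'.
Qed.

Lemma L2 x x' y y' : connect R2 x x' -> e x y -> e x' y' -> connect R2 y y'.
Proof.
move=> /connectP[p hp ->]; elim: p x y hp => [|z p IH] x y /=.
  move=> _ hy hy'; apply: connect1; apply/existsP; exists x; by rewrite esym hy hy'.
move=> /andP[hxz hp] hy hy'.
have /existsP[w /andP[hw1 hw2]] := hxz.
apply: (@connect_trans _ _ w); first by apply: (L1 hxz hy); rewrite esym.
apply: (IH z w hp _ hy'); by rewrite esym.
Qed.

Lemma cover u y0 : (forall x y, connect e x y) -> e u y0 -> forall z, connect R2 u z || connect R2 y0 z.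
Proof.
move=> conn huy z; have /connectP[p hp ->] := conn u z.
elim/last_ind: p hp => [|p w IH]; first by rewrite /= connect0.
rewrite rcons_path last_rcons => /andP[hp hw].
case/orP: (IH hp) => h.
  by apply/orP; right; apply: (L2 h huy hw).
apply/orP; left; apply: (L2 h _ hw); by rewrite esym.
Qed.

End Graph.

Local Close Scope classical_set_scope.



Section Wass.
Variable R : realType.
Variable T : finType.
Variable e : rel T.

Lemma gdist_le x y : (gdist e x y <= #|T|)%N.
Proof. by rewrite /gdist; apply: leq_trans (find_size _ _) _; rewrite size_iota. Qed.

Lemma gdist_xx x : gdist e x x = 0%N.
Proof.
rewrite /gdist; have : (0 < #|T|)%N by apply/card_gt0P; exists x.
by case: #|T| => // n _ /=; rewrite finset.in_set1 eqxx.
Qed.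

Lemma gdist_neq x y : x != y -> (1 <= gdist e x y)%N.
Proof.
move=> hxy; rewrite /gdist; have : (0 < #|T|)%N by apply/card_gt0P; exists x.
by case: #|T| => // n _ /=; rewrite finset.in_set1 eq_sym (negbTE hxy).
Qed.

Lemma gdist_edge x y : e x y -> (gdist e x y <= 1)%N.
Proof.
move=> hxy; rewrite /gdist.
case hT: #|T| => [//|[|n]] /=; first by case: ifP.
case: ifP => // _; case: ifP => // /negP []; rewrite /= finset.in_setU; apply/orP; right.
rewrite finset.inE; apply/existsP; exists x; by rewrite finset.in_set1 eqxx hxy.
Qed.

Definition cost (P : T -> T -> R) : R := \sum_x \sum_y (gdist e x y)%:R * P x y.

Lemma cost_ge0 P : (forall x y, 0 <= P x y) -> 0 <= cost P.
Proof. move=> hP; apply: sumr_ge0 => x _; apply: sumr_ge0 => y _; apply: mulr_ge0 => //. Qed.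

Lemma W_le (m n : T -> R) P : transport_plan m n P -> wasserstein e m n <= cost P.
Proof.
move=> hP; rewrite /wasserstein.
have hl : has_lbound [set c : R | exists P, transport_plan m n P /\ c = \sum_x \sum_y (gdist e x y)%:R * P x y].
  exists 0 => c [Q [hQ ->]]; apply: cost_ge0; by case: hQ.
apply: (ge_inf hl); by exists P.
Qed.

Lemma W_ge (m n : T -> R) (c0 : R) : (exists P, transport_plan m n P) ->
  (forall P, transport_plan m n P -> c0 <= cost P) -> c0 <= wasserstein e m n.
Proof.
move=> [P hP] hc; rewrite /wasserstein; apply: lb_le_inf.
  by exists (cost P); exists P.
by move=> c [Q [hQ ->]]; apply: hc.
Qed.

Lemma le_sum_single (F : T -> R) x : (forall y, 0 <= F y) -> F x <= \sum_y F y.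
Proof. move=> hF; rewrite (bigD1 x) //= lerDl; by apply: sumr_ge0. Qed.

Lemma plan_sum (m n : T -> R) P : transport_plan m n P -> \sum_x m x = \sum_x n x.
Proof.
case=> _ [hr hc]; rewrite -(eq_bigr _ (fun x _ => hr x)) exchange_big /=.
by apply: eq_bigr => y _; rewrite hc.
Qed.

Lemma cost_ge_tv (m n : T -> R) P : transport_plan m n P ->
  1 / 2 * \sum_x `|m x - n x| <= cost P.
Proof.
move=> hP; have hs := plan_sum hP; case: hP => [h0 [hr hc]].
have step x : (`|m x - n x| + (m x - n x)) / 2 <= \sum_y (gdist e x y)%:R * P x y.
  have h1 : P x x <= m x by have := le_sum_single x (fun z => h0 x z); rewrite hr.
  have h2 : P x x <= n x by have := @le_sum_single (fun z => P z x) x (fun z => h0 z x); rewrite hc.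
  apply: (@le_trans _ _ (m x - P x x)).
    by case: (lerP (n x) (m x)) => h; lra.
  have hsum : \sum_y P x y = P x x + \sum_(y | y != x) P x y by rewrite (bigD1 x).
  have hrhs : \sum_y (gdist e x y)%:R * P x y = \sum_(y | y != x) (gdist e x y)%:R * P x y.
    by rewrite (bigD1 x) //= gdist_xx mul0r add0r.
  have hle : \sum_(y | y != x) P x y <= \sum_(y | y != x) (gdist e x y)%:R * P x y.
    apply: ler_sum => y hy; rewrite -[X in X <= _]mul1r; apply: ler_wpM2r => //.
    by rewrite (ler_nat R 1); apply: gdist_neq; rewrite eq_sym.
  have := hr x; lra.
apply: (@le_trans _ _ (\sum_x (`|m x - n x| + (m x - n x)) / 2)); last by apply: ler_sum.
rewrite -mulr_suml big_split /= sumrB hs subrr addr0; lra.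
Qed.
Lemma prod_plan (m n : T -> R) : (forall x, 0 <= m x) -> (forall x, 0 <= n x) ->
  \sum_x m x = 1 -> \sum_x n x = 1 -> transport_plan m n (fun x y => m x * n y).
Proof.
move=> m0 n0 m1 n1; split; first by move=> x y; apply: mulr_ge0.
split; first by move=> x; rewrite -mulr_sumr n1 mulr1.
by move=> y; rewrite -mulr_suml m1 mul1r.
Qed.

Lemma W_small (m n : T -> R) : (forall x, 0 <= m x) -> (forall x, 0 <= n x) ->
  \sum_x m x = 1 -> \sum_x n x = 1 ->
  wasserstein e m n <= #|T|%:R * nrm (fun x => m x - n x).
Proof.
move=> m0 n0 m1 n1.
pose mn x := Num.min (m x) (n x).
pose a x := m x - mn x. pose b x := n x - mn x.
have a0 x : 0 <= a x by rewrite /a subr_ge0 ge_min lexx.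
have b0 x : 0 <= b x by rewrite /b subr_ge0 ge_min lexx orbT.
have mn0 x : 0 <= mn x by rewrite /mn le_min m0 n0.
pose s := \sum_x a x.
have sb : \sum_x b x = s.
  by rewrite /s /a /b !sumrB m1 n1.
have s0 : 0 <= s by apply: sumr_ge0.
have as0 x : s = 0 -> a x = 0.
  move=> hs; apply/eqP; rewrite eq_le a0 andbT -hs.
  by apply: le_sum_single.
have bs0 x : s = 0 -> b x = 0.
  move=> hs; apply/eqP; rewrite eq_le b0 andbT -hs -sb.
  by apply: le_sum_single.
pose P x y := (if x == y then mn x else 0) + a x * b y / s.
have hP : transport_plan m n P.
  split; first by move=> x y; apply: addr_ge0; [case: ifP|apply: divr_ge0 => //; apply: mulr_ge0].
  split.
    move=> x; rewrite /P big_split /= (sum_if_eq (fun _ => mn x)).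
    rewrite -mulr_suml -mulr_sumr sb.
    have [hs|hs] := eqVneq s 0; first by rewrite hs mulr0 mul0r addr0; have := as0 x hs; rewrite /a; lra.
    by rewrite mulfK // /a; lra.
  move=> y; rewrite /P big_split /=.
  have -> : \sum_x (if x == y then mn x else 0) = mn y by rewrite (sum_if_eq' (fun x => mn x)).
  under eq_bigr do rewrite mulrAC.
  rewrite -mulr_suml -mulr_suml.
  have [hs|hs] := eqVneq s 0; first by rewrite hs invr0 mulr0 mul0r addr0; have := bs0 y hs; rewrite /b; lra.
  rewrite -/s divff // mul1r /b; lra.
apply: (le_trans (W_le hP)).
apply: (@le_trans _ _ (#|T|%:R * s)).
  apply: (@le_trans _ _ (\sum_x \sum_y #|T|%:R * (a x * b y / s))).
    apply: ler_sum => x _; apply: ler_sum => y _; rewrite /P.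
    case: eqVneq => [->|hxy]; first by rewrite gdist_xx mul0r; apply: mulr_ge0 => //; apply: divr_ge0 => //; apply: mulr_ge0.
    rewrite add0r; apply: ler_wpM2r; first by apply: divr_ge0 => //; apply: mulr_ge0.
    by rewrite ler_nat gdist_le.
  under eq_bigr do rewrite -mulr_sumr.
  rewrite -mulr_sumr; apply: ler_wpM2l => //.
  under eq_bigr do rewrite -mulr_suml -mulr_sumr sb.
  rewrite -mulr_suml.
  have -> : \sum_i a i * s = s * s by rewrite -mulr_suml.
  have [hs|hs] := eqVneq s 0; first by rewrite hs invr0 mulr0.
  by rewrite mulfK.
apply: ler_wpM2l => //; apply: ler_sum => x _.
rewrite /a /mn; case: (lerP (m x) (n x)) => h; lra.
Qed.
End Wass.

Local Close Scope classical_set_scope.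



Section Flow.
Variable R : realType.
Variable T : finType.
Variable e : rel T.
Hypothesis esym : symmetric e.

Definition I2 (a b x y : T) : R := if (x == a) && (y == b) then 1 else 0.

Lemma I2_sum a b x : \sum_y I2 a b x y = dlt R a x.
Proof.
rewrite /I2 /dlt; case: (x == a) => /=; last by rewrite big1.
by rewrite (sum_if_eq' (fun _ => (1:R)) b).
Qed.

Lemma path_flow z r0 : connect e z r0 -> exists h : T -> T -> R,
  [/\ forall x y, h x y = - h y x, forall x y, ~~ e x y -> h x y = 0 &
      forall x, \sum_y h x y = dlt R z x - dlt R r0 x].
Proof.
move=> /connectP[p hp ->]; elim: p z hp => [|z1 p IH] z /=.
  by move=> _; exists (fun _ _ => 0); split => [x y|//|x]; rewrite ?oppr0 // big1 // subrr.
move=> /andP[hz hp]; have [h1 [ha1 he1 hd1]] := IH z1 hp.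
exists (fun x y => h1 x y + (I2 z z1 x y - I2 z1 z x y)); split.
- move=> x y; rewrite ha1 /I2 opprD; congr (_ + _).
  by rewrite opprB [(y == z) && _]andbC [(y == z1) && _]andbC.
- move=> x y hxy; rewrite he1 // add0r /I2.
  have g1 : ((x == z) && (y == z1)) = false.
    apply/negP => /andP[/eqP ex /eqP ey]; move: hxy; by rewrite ex ey hz.
  have g2 : ((x == z1) && (y == z)) = false.
    apply/negP => /andP[/eqP ex /eqP ey]; move: hxy; by rewrite ex ey esym hz.
  by rewrite g1 g2 subrr.
- move=> x; rewrite big_split /= sumrB hd1 !I2_sum; lra.
Qed.

Lemma flow_exists (r0 : T) : (forall x y, connect e x y) -> exists2 M : R, 0 <= M &
  forall sg : T -> R, \sum_x sg x = 0 -> exists g : T -> T -> R,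
  [/\ forall x y, g x y = - g y x, forall x y, ~~ e x y -> g x y = 0,
      forall x, \sum_y g x y = sg x & forall x y, `|g x y| <= M * nrm sg].
Proof.
move=> conn.
have [H hH] := choice (fun z => path_flow (conn z r0)).
pose M := \sum_z \sum_x \sum_y `|H z x y|.
have M0 : 0 <= M by apply: sumr_ge0 => *; apply: sumr_ge0 => *; apply: sumr_ge0.
exists M => // sg hs.
exists (fun x y => \sum_z sg z * H z x y); split.
- move=> x y; rewrite -sumrN; apply: eq_bigr => z _.
  by have [ha _ _] := hH z; rewrite ha mulrN.
- move=> x y hxy; rewrite big1 // => z _.
  by have [_ he _] := hH z; rewrite he // mulr0.
- move=> x; rewrite exchange_big /=.
  under eq_bigr => z _ do (rewrite -mulr_sumr; have [_ _ hd] := hH z; rewrite hd mulrBr).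
  rewrite sumrB -mulr_suml hs mul0r subr0.
  rewrite -[RHS](sum_if_eq sg x); apply: eq_bigr => z _.
  by rewrite /dlt eq_sym; case: eqP; rewrite ?mulr1 ?mulr0.
- move=> x y; apply: (le_trans (ler_norm_sum _ _ _)).
  rewrite /nrm mulr_sumr; apply: ler_sum => z _.
  rewrite normrM mulrC; apply: ler_wpM2r => //.
  apply: (@le_trans _ _ (\sum_y `|H z x y|)); first by apply: (@le_sum_single R T (fun y => `|H z x y|)).
  apply: (@le_trans _ _ (\sum_x \sum_y `|H z x y|)).
    by apply: (@le_sum_single R T (fun x => \sum_y `|H z x y|)) => w; apply: sumr_ge0.
  apply: (@le_sum_single R T (fun z => \sum_x \sum_y `|H z x y|)) => w.
  by apply: sumr_ge0 => *; apply: sumr_ge0.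
Qed.
End Flow.

Section Key.
Variable R : realType.
Variable T : finType.
Variable e : rel T.
Hypothesis esym : symmetric e.
Hypothesis eirr : irreflexive e.
Hypothesis deg0 : forall x, (0 < deg e x)%N.
Hypothesis conn : forall x y, connect e x y.

Lemma key_plan (x0 : T) (A : {set T}) : bip e A -> exists2 eta : R, 0 < eta &
  forall mu nu : T -> R, (forall x, x \notin A -> mu x = 0) -> (forall x, 0 <= nu x) ->
  \sum_x mu x = 1 -> \sum_x nu x = 1 ->
  nrm (fun x => mu x - pA R e A x) + nrm (fun x => nu x - pi R e x) < eta ->
  wasserstein e mu nu = 1 / 2 * \sum_x `|mu x - nu x|.
Proof.
move=> hb.
have [M M0 hM] := flow_exists R esym x0 conn.
have D0 : 0 < Dsum R e := Dsum_gt0 R deg0 x0.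
pose f0 := (Dsum R e)^-1.
have f00 : 0 < f0 by rewrite invr_gt0.
have M1 : 0 < M + 1 by rewrite ltr_wpDl.
exists (f0 / (M + 1)); first by apply: divr_gt0.
move=> mu nu mS nu0 mu1 nu1 hsmall.
pose sg x := mu x - nu x + piS R e (~: A) x - piS R e A x.
have sg0 : \sum_x sg x = 0.
  rewrite /sg sumrB big_split sumrB /= mu1 nu1 (sum_piS R esym eirr deg0 x0 hb).
  rewrite (sum_piS R esym eirr deg0 x0 (bipC hb)); lra.
have [g [ga ge gd gb]] := hM sg sg0.
have hsg : nrm sg <= nrm (fun x => mu x - pA R e A x) + nrm (fun x => nu x - pi R e x).
  rewrite /nrm -big_split /=; apply: ler_sum => x _.
  case: (boolP (x \in A)) => hx.
    have -> : sg x = (mu x - pA R e A x) - (nu x - pi R e x).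
      by rewrite /sg /pA /piS finset.in_setC hx /=; ring.
    exact: ler_normB.
  have -> : sg x = - (nu x - pi R e x).
    by rewrite /sg /piS finset.in_setC hx (negbTE hx) /= mS //; ring.
  by rewrite normrN /pA /piS (negbTE hx) mS // mulr0 subrr normr0 add0r.
have hg x y : - f0 <= g x y.
  have h1 : M * nrm sg <= M * (f0 / (M + 1)) by apply: ler_wpM2l => //; apply: ltW; apply: le_lt_trans hsmall.
  have h2 : M * (f0 / (M + 1)) <= f0.
    rewrite mulrA ler_pdivrMr //; nra.
  have := gb x y; have := ler_norm (- g x y); rewrite normrN; lra.
pose F x y := if (x \in A) && e x y then f0 + g x y else 0.
have F0 x y : 0 <= F x y.
  rewrite /F; case: ifP => // _; have := hg x y; lra.
have sumg x : \sum_y (if e x y then g x y else 0) = \sum_y g x y.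
  apply: eq_bigr => y _; case: ifP => // /negbT h; by rewrite ge.
have pif x : f0 * (deg e x)%:R = pi R e x by rewrite /pi mulrC.
have rowF x : x \in A -> \sum_y F x y = pi R e x + sg x.
  move=> hx; rewrite /F hx /=.
  have -> : \sum_y (if e x y then f0 + g x y else 0) =
    \sum_y (if e x y then f0 else 0) + \sum_y (if e x y then g x y else 0).
    by rewrite -big_split /=; apply: eq_bigr => y _; case: ifP; rewrite ?addr0.
  rewrite sumg gd -pif degE mulr_sumr; congr (_ + _); apply: eq_bigr => y _.
  by case: ifP; rewrite ?mulr1 ?mulr0.
have rowF' x : x \notin A -> \sum_y F x y = 0.
  by move=> hx; rewrite big1 // => y _; rewrite /F (negbTE hx).
have colF y : y \in A -> \sum_x F x y = 0.
  move=> hy; rewrite big1 // => x _; rewrite /F.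
  case: (boolP (e x y)) => hxy; last by rewrite andbF.
  by rewrite (hb _ _ hxy) hy.
have colF' y : y \notin A -> \sum_x F x y = pi R e y - sg y.
  move=> hy.
  have -> : \sum_x F x y = \sum_x (if e x y then f0 else 0) + \sum_x (if e x y then g x y else 0).
    rewrite -big_split /=; apply: eq_bigr => x _; rewrite /F.
    case: (boolP (e x y)) => hxy; last by rewrite andbF addr0.
    by rewrite (hb _ _ hxy) hy.
  have -> : \sum_x (if e x y then g x y else 0) = - sg y.
    rewrite -gd -sumrN; apply: eq_bigr => x _; rewrite -ga.
    by case: ifP => // /negbT h; rewrite ge.
  rewrite -pif (degE' R esym) mulr_sumr; congr (_ - _); apply: eq_bigr => x _.
  by case: ifP; rewrite ?mulr1 ?mulr0.
pose P x y := (if (x == y) && (x \in A) then nu x else 0) + F x y.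
have diagr x : \sum_y (if (x == y) && (x \in A) then nu x else 0) = if x \in A then nu x else 0.
  case: (x \in A); last by rewrite big1 // => y _; rewrite andbF.
  under eq_bigr do rewrite andbT; exact: (sum_if_eq (fun _ => nu x) x).
have diagc y : \sum_x (if (x == y) && (x \in A) then nu x else 0) = if y \in A then nu y else 0.
  rewrite -(sum_if_eq' (fun x => if x \in A then nu x else 0) y); apply: eq_bigr => x _.
  by case: eqP => //= ->; case: (y \in A).
have hP : transport_plan mu nu P.
  split; first by move=> x y; apply: addr_ge0 => //; case: ifP.
  split.
    move=> x; rewrite /P big_split /= diagr.
    case: (boolP (x \in A)) => hx; last by rewrite rowF' // mS // addr0.
    rewrite rowF // /sg /piS finset.in_setC hx /=; ring.
  move=> y; rewrite /P big_split /= diagc.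
  case: (boolP (y \in A)) => hy; first by rewrite colF // addr0.
  rewrite colF' // /sg /piS finset.in_setC hy (negbTE hy) /= mS //; ring.
pose sA := \sum_x (if x \in A then mu x - nu x else 0).
have hcost : cost e P <= sA.
  apply: (@le_trans _ _ (\sum_x \sum_y F x y)).
    apply: ler_sum => x _; apply: ler_sum => y _; rewrite /P.
    case: eqVneq => [<-|hxy] /=; first by rewrite gdist_xx mul0r.
    rewrite add0r /F; case: ifP => hc; last by rewrite mulr0.
    rewrite -[X in _ <= X]mul1r; apply: ler_wpM2r; first by have := hg x y; lra.
    by rewrite (ler_nat R _ 1) gdist_edge //; case/andP: hc.
  rewrite /sA; apply: ler_sum => x _; case: (boolP (x \in A)) => hx.
    by rewrite rowF // /sg /piS finset.in_setC hx /=; lra.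
  by rewrite rowF'.
have hA x : x \in A -> 0 <= mu x - nu x.
  move=> hx; have := rowF x hx; rewrite /sg /piS finset.in_setC hx /= => h.
  have : 0 <= \sum_y F x y by apply: sumr_ge0.
  lra.
pose sB := \sum_x (if x \in A then 0 else nu x).
have hAB : sA = sB.
  have : \sum_x (mu x - nu x) = sA - sB.
    rewrite /sA /sB -sumrB; apply: eq_bigr => x _; case: (boolP (x \in A)) => hx.
      by rewrite subr0.
    by rewrite mS // sub0r add0r.
  rewrite sumrB mu1 nu1; lra.
have htv : \sum_x `|mu x - nu x| = sA + sB.
  rewrite /sA /sB -big_split /=; apply: eq_bigr => x _; case: (boolP (x \in A)) => hx.
    by rewrite addr0 ger0_norm // hA.
  by rewrite add0r mS // sub0r normrN ger0_norm.
apply/eqP; rewrite eq_le; apply/andP; split.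
  apply: (le_trans (W_le e hP)); apply: (le_trans hcost); rewrite htv -hAB; lra.
apply: W_ge; first by exists P.
by move=> Q hQ; apply: cost_ge_tv.
Qed.
End Key.

Local Close Scope classical_set_scope.



Section Final.
Variable R : realType.
Variable T : finType.
Variable e : rel T.

Lemma nrm_tri (f g p : T -> R) :
  nrm (fun x => f x - g x) <= nrm (fun x => f x - p x) + nrm (fun x => g x - p x).
Proof.
rewrite /nrm -big_split /=; apply: ler_sum => x _.
have -> : f x - g x = (f x - p x) - (g x - p x) by ring.
exact: ler_normB.
Qed.

Lemma par_all (P : nat -> Prop) N : (forall j, (N <= j)%N -> P (j.*2)) ->
  (forall j, (N <= j)%N -> P (j.*2).+1) -> forall k, (N.*2 <= k)%N -> P k.
Proof.
move=> he ho k hk.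
have hj : (N <= k./2)%N by rewrite -[N]doubleK; apply: half_leq.
rewrite -(odd_double_half k); case: (odd k).
  by rewrite add1n; apply: ho.
by rewrite add0n; apply: he.
Qed.

Lemma W_single (m n : T -> R) (u : T) : (forall y, y = u) -> wasserstein e m n = 0.
Proof.
move=> hT.
have c0 (Q : T -> T -> R) : cost e Q = 0.
  rewrite /cost big1 // => x _; rewrite big1 // => y _.
  by rewrite (hT x) (hT y) gdist_xx mul0r.
case: (pselect (exists P, transport_plan m n P)) => [[P hP]|hno].
  apply/eqP; rewrite eq_le; apply/andP; split.
    by rewrite -(c0 P); apply: W_le.
  apply: W_ge; first by exists P.
  by move=> Q _; rewrite c0.
rewrite /wasserstein inf_out // => -[[c [Q [hQ _]]] _]; apply: hno; by exists Q.
Qed.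

Lemma deg_pos : (forall x y, connect e x y) -> (exists x y : T, x != y) -> forall x, (0 < deg e x)%N.
Proof.
move=> conn [x1 [y1 hxy]] x.
have [z hz] : exists z, z != x.
  case: (eqVneq x x1) => [->|h]; first by exists y1; rewrite eq_sym.
  by exists x1; rewrite eq_sym.
have /connectP[p hp hzl] := conn x z.
case: p hp hzl => [|w p] /=; first by move=> _ hzx; move: hz; rewrite hzx eqxx.
move=> /andP[hxw _] _; rewrite /deg; apply/card_gt0P; exists w.
exact: mem_set.
Qed.

Lemma no_tv0 (mu nu : nat -> T -> R) N0 :
  (forall k x, 0 <= mu k x) -> (forall k x, 0 <= nu k x) ->
  (forall k, \sum_x mu k x = 1) -> (forall k, \sum_x nu k x = 1) ->
  (forall k, (N0 <= k)%N -> `|1 / 2 - wasserstein e (mu k) (nu k)| < 1 / 4) ->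
  (forall eps, 0 < eps -> exists N, forall k, (N <= k)%N -> nrm (fun x => mu k x - nu k x) < eps) ->
  False.
Proof.
move=> m0 n0 m1 n1 hN0 hc.
have hT : 0 <= #|T|%:R :> R by rewrite ler0n.
have he : 0 < 1 / (4 * (#|T|%:R + 1)) :> R.
  by apply: divr_gt0 => //; apply: mulr_gt0 => //; rewrite ltr_wpDl.
have [N hN] := hc _ he.
pose k := maxn N0 N.
have h1 := hN0 k (leq_maxl _ _).
have h2 := hN k (leq_maxr _ _).
have h3 := W_small e (m0 k) (n0 k) (m1 k) (n1 k).
have h4 : #|T|%:R * nrm (fun x => mu k x - nu k x) <= #|T|%:R * (1 / (4 * (#|T|%:R + 1))).
  by apply: ler_wpM2l => //; apply: ltW.
have h5 : #|T|%:R * (1 / (4 * (#|T|%:R + 1))) <= 1 / 4 :> R.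
  rewrite mulrA mulr1 ler_pdivrMr; last by apply: mulr_gt0 => //; rewrite ltr_wpDl.
  rewrite mulrA mul1r; rewrite -ler_pdivrMl //; nra.
have := ler_norm (1 / 2 - wasserstein e (mu k) (nu k)); lra.
Qed.

Lemma cv_tv (f g : nat -> T -> R) p : cv f p -> cv g p ->
  forall eps, 0 < eps -> exists N, forall k, (N <= k)%N -> nrm (fun x => f k x - g k x) < eps.
Proof.
move=> c1 c2 eps he.
have he2 : 0 < eps / 2 by apply: divr_gt0.
have [N1 h1] := c1 _ he2; have [N2 h2] := c2 _ he2.
exists (maxn N1 N2) => k hk; apply: le_lt_trans (nrm_tri _ _ p) _.
have := h1 k (leq_trans (leq_maxl _ _) hk); have := h2 k (leq_trans (leq_maxr _ _) hk); lra.
Qed.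

Definition cvE (f : nat -> T -> R) p := forall eps, 0 < eps -> exists N, forall j, (N <= j)%N ->
  nrm (fun x => f (j.*2) x - p x) < eps.
Definition cvO (f : nat -> T -> R) p := forall eps, 0 < eps -> exists N, forall j, (N <= j)%N ->
  nrm (fun x => f (j.*2).+1 x - p x) < eps.

Lemma par_tv (f g : nat -> T -> R) p q : cvE f p -> cvO f q -> cvE g p -> cvO g q ->
  forall eps, 0 < eps -> exists N, forall k, (N <= k)%N -> nrm (fun x => f k x - g k x) < eps.
Proof.
move=> c1 c2 c3 c4 eps he.
have he2 : 0 < eps / 2 by apply: divr_gt0.
have [N1 h1] := c1 _ he2; have [N2 h2] := c2 _ he2.
have [N3 h3] := c3 _ he2; have [N4 h4] := c4 _ he2.
pose N := maxn (maxn N1 N2) (maxn N3 N4).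
exists N.*2; apply: par_all => j hj.
  apply: le_lt_trans (nrm_tri _ _ p) _.
  have := h1 j (leq_trans (leq_trans (leq_maxl _ _) (leq_maxl _ _)) hj).
  have := h3 j (leq_trans (leq_trans (leq_maxl _ _) (leq_maxr _ _)) hj); lra.
apply: le_lt_trans (nrm_tri _ _ q) _.
have := h2 j (leq_trans (leq_trans (leq_maxr _ _) (leq_maxl _ _)) hj).
have := h4 j (leq_trans (leq_trans (leq_maxr _ _) (leq_maxr _ _)) hj); lra.
Qed.

Lemma side_compl (A : {set T}) k x : (x \in side (~: A) k) = (x \notin side A k).
Proof. by rewrite /side; case: (odd k); rewrite !finset.in_setC ?negbK. Qed.

End Final.

Local Close Scope classical_set_scope.


Local Open Scope classical_set_scope.

Unset Implicit Arguments.
Set Strict Implicit.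

Theorem corollary5p3 (R : realType) (T : finType) (e : rel T) (u v : T) (a b : R) :
  simple_graph e -> connected_graph e ->
  0 <= a -> a <= b -> b <= 1 ->
  (Wk e u v a b @ \oo --> (1 / 2 : R)) ->
  b < 1 ->
  exists N : nat, forall k : nat, (N <= k)%N ->
    Wk e u v a b k =
      1 / 2 * \sum_(w : T) `|walk_dist e u a k w - walk_dist e v b k w|.
Proof.
move=> [hsym hirr] conn a0 ab b1 hW bl1.
have q0 : (0 : R) < 1 / 4 by rewrite divr_gt0 ?ltr01 ?ltr0n.
move: hW => /cvgrPdist_lt /(_ _ q0) /near_oo_ex [N0 hN0].
case: (boolP [exists x : T, [exists y : T, x != y]]) => hex; last first.
  exfalso.
  have hT : forall y : T, y = u.
    move=> y; apply/eqP; apply: contraNT hex => hyu; apply/existsP; exists y; apply/existsP; by exists u.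
  have := hN0 N0 (leqnn _); rewrite /Wk (W_single e _ _ hT) subr0 => h.
  have : (1/2 : R) <= `|1/2| := ler_norm _. lra.
have deg0 : forall x, (0 < deg e x)%N.
  apply: deg_pos => //; case/existsP: hex => x /existsP[y hxy]; by exists x, y.
have ha01 : 0 <= a <= 1 by rewrite a0 (le_trans ab b1).
have hb01 : 0 <= b <= 1 by rewrite (le_trans a0 ab) b1.
have m0 k x : 0 <= walk_dist e u a k x :=
  iter_ge0 (fun y z => trans_ge0 deg0 y z ha01) k (fun x => dlt_ge0 R u x) x.
have n0 k x : 0 <= walk_dist e v b k x :=
  iter_ge0 (fun y z => trans_ge0 deg0 y z hb01) k (fun x => dlt_ge0 R v x) x.
have m1 k : \sum_x walk_dist e u a k x = 1 :=
  etrans (sum_iter (trans_sum1 hirr deg0 a) k (dlt R u)) (dlt_sum R u).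
have n1 k : \sum_x walk_dist e v b k x = 1 :=
  etrans (sum_iter (trans_sum1 hirr deg0 b) k (dlt R v)) (dlt_sum R v).
have NC := no_tv0 m0 n0 m1 n1 hN0.
have symR := sym_connect_sym (R2_sym hsym).
case: (eqVneq a 0) => [ha|ha]; last first.
  exfalso.
  have ha' : 0 < a by rewrite lt_def ha a0.
  have hb' : 0 < b := lt_le_trans ha' ab.
  have c1 := cv_lazy hsym hirr deg0 u (introT andP (conj ha' (le_lt_trans ab bl1))) conn.
  have c2 := cv_lazy hsym hirr deg0 v (introT andP (conj hb' bl1)) conn.
  exact: NC (cv_tv c1 c2).
subst a.
have [y0 hy0] := nbr deg0 u.
case: (boolP (connect (R2 e) y0 u)) => hyu.
  exfalso.
  have hu z : connect (R2 e) u z.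
    case/orP: (cover hsym conn hy0 z) => // h.
    by apply: (@connect_trans _ _ y0) => //; rewrite symR.
  have hall x y : connect (R2 e) x y.
    by apply: (@connect_trans _ _ u) => //; rewrite symR.
  have c1 := cv_single (R:=R) hsym hirr deg0 u hall.
  case: (eqVneq b 0) => [hb|hb].
    subst b; have c2 := cv_single (R:=R) hsym hirr deg0 v hall.
    exact: NC (cv_tv c1 c2).
  have hb' : 0 < b by rewrite lt_def hb (le_trans a0 ab).
  have c2 := cv_lazy hsym hirr deg0 v (introT andP (conj hb' bl1)) conn.
  exact: NC (cv_tv c1 c2).
pose E := [set z | connect (R2 e) u z]%SET.
have hE z : (z \in E) = connect (R2 e) u z by rewrite finset.inE.
have uE : u \in E by rewrite hE connect0.
have hO z : z \notin E -> connect (R2 e) y0 z.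
  by rewrite hE => h; move: (cover hsym conn hy0 z); rewrite (negbTE h).
have bE : bip e E.
  move=> x w hxw; rewrite [x \in E]hE.
  case: (boolP (connect (R2 e) u x)) => hx.
    symmetry; apply/negP; rewrite hE => huw.
    move/negP: hyu; apply; apply: (@connect_trans _ _ w); first exact: (L2 hsym hx hy0 hxw).
    by rewrite symR.
  have hy0' : e y0 u by rewrite hsym.
  have hx' : x \notin E by rewrite hE.
  by rewrite hE (L2 hsym (hO x hx') hy0' hxw).
have cE x y : x \in E -> y \in E -> connect (R2 e) x y.
  rewrite !hE => hx hy; apply: (@connect_trans _ _ u) => //; by rewrite symR.
have cEc x y : x \notin E -> y \notin E -> connect (R2 e) x y.
  move=> /hO hx /hO hy; apply: (@connect_trans _ _ y0) => //; by rewrite symR.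
case: (eqVneq b 0) => [hb|hb].
  subst b; exfalso.
  case: (boolP (v \in E)) => hv.
    have e1 := cv_bip_even (R:=R) hsym hirr deg0 bE cE uE.
    have o1 := cv_bip_odd (R:=R) hsym hirr deg0 bE cEc uE.
    have e2 := cv_bip_even (R:=R) hsym hirr deg0 bE cE hv.
    have o2 := cv_bip_odd (R:=R) hsym hirr deg0 bE cEc hv.
    exact: NC (par_tv e1 o1 e2 o2).
  have vE : v \in ~: E by rewrite finset.in_setC.
  have bEc := bipC bE.
  have := hN0 N0 (leqnn _); rewrite /Wk => h.
  have hW1 : 1 <= wasserstein e (walk_dist e u (0:R) N0) (walk_dist e v (0:R) N0).
    apply: W_ge; first by exists (fun x y => walk_dist e u (0:R) N0 x * walk_dist e v (0:R) N0 y); apply: prod_plan.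
    move=> Q hQ; apply: le_trans (cost_ge_tv e hQ).
    have -> : \sum_x `|walk_dist e u (0:R) N0 x - walk_dist e v (0:R) N0 x| =
        \sum_x (walk_dist e u (0:R) N0 x + walk_dist e v (0:R) N0 x).
      apply: eq_bigr => x _.
      case: (boolP (x \in side E N0)) => hx.
        rewrite (walk0_supp R bEc vE (k:=N0)) ?side_compl ?hx // subr0 addr0.
        by rewrite ger0_norm.
      rewrite (walk0_supp R bE uE hx) sub0r add0r normrN ger0_norm //.
    by rewrite big_split /= m1 n1; lra.
  have := ler_norm (wasserstein e (walk_dist e u (0:R) N0) (walk_dist e v (0:R) N0) - 1 / 2).
  rewrite distrC in h; lra.
have hb' : 0 < b by rewrite lt_def hb (le_trans a0 ab).
have [eta1 eta10 H1] := key_plan R hsym hirr deg0 conn u bE.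
have [eta2 eta20 H2] := key_plan R hsym hirr deg0 conn u (bipC bE).
pose eta := Num.min eta1 eta2.
have eta0 : 0 < eta / 2 by apply: divr_gt0; rewrite // lt_min eta10 eta20.
have etale1 : eta <= eta1 by rewrite ge_min lexx.
have etale2 : eta <= eta2 by rewrite ge_min lexx orbT.
have [N1 h1] := cv_bip_even (R:=R) hsym hirr deg0 bE cE uE eta0.
have [N2 h2] := cv_bip_odd (R:=R) hsym hirr deg0 bE cEc uE eta0.
have [N3 h3] := cv_lazy hsym hirr deg0 v (introT andP (conj hb' bl1)) conn eta0.
exists (maxn (maxn N1 N2).*2 N3) => k hk.
have hk3 : (N3 <= k)%N := leq_trans (leq_maxr _ _) hk.
have hj : (maxn N1 N2 <= k./2)%N.
  rewrite -[maxn N1 N2]doubleK; apply: half_leq; exact: leq_trans (leq_maxl _ _) hk.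
have hnu := h3 k hk3.
rewrite /Wk.
case ho: (odd k).
  have hk' : k = (k./2).*2.+1 by rewrite -{1}(odd_double_half k) ho add1n.
  have hmu := h2 (k./2) (leq_trans (leq_maxr _ _) hj); rewrite -hk' in hmu.
  apply: H2 => //.
  - move=> x hx; apply: (walk0_supp R bE uE (k:=k)); by rewrite /side ho.
  - lra.
have hk' : k = (k./2).*2 by rewrite -{1}(odd_double_half k) ho add0n.
have hmu := h1 (k./2) (leq_trans (leq_maxl _ _) hj); rewrite -hk' in hmu.
apply: H1 => //.
- move=> x hx; apply: (walk0_supp R bE uE (k:=k)); by rewrite /side ho.
- lra.
Qed.
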